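(* Let $m$ and $n$ be relatively prime positive integers such that every solvable group of order $mn$ has a normal subgroup of order $m$. Then every left brace of size $mn$ is (isomorphic to) a semidirect product $B_1\rtimes_{\tau} B_2$ of a left brace $B_1$ of size $m$ and a left brace $B_2$ of size $n$, for some group morphism $\tau:(B_2,\cdot)\to\operatorname{Aut}(B_1,+,\cdot)$.
   Context: A (left) brace is a triple $(B,+,\cdot)$ where $(B,+)$ is an abelian group, $(B,\cdot)$ is a group, and $a\cdot(b+c)+a=a\cdot b+a\cdot c$ for all $a,b,c\in B$. Its size is $|B|$. A brace morphism is a map preserving both operations; an isomorphism is a bijective brace morphism. $\operatorname{Aut}(B_1,+,\cdot)$ denotes the group of brace automorphisms of $B_1$. Given braces $B_1,B_2$ and a group morphism $\tau:(B_2,\cdot)\to\operatorname{Aut}(B_1,+,\cdot)$, the semidirect product $B_1\rtimes_\tau B_2$ is the set $B_1\times B_2$ with $(a,b)+(a',b')=(a+a',b+b')$ and $(a,b)\cdot(a',b')=(a\cdot\tau(b)(a'),\,b\cdot b')$; it is a brace. When $\tau$ is trivial it is called the direct product. *)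

(* Defs.v *)
From HB Require Import structures.
From mathcomp Require Import all_boot all_fingroup all_solvable.
Set Implicit Arguments. Unset Strict Implicit. Unset Printing Implicit Defensive.

Definition is_abelian_group (T : Type) (add : T -> T -> T) : Prop :=
  (forall a b c, add a (add b c) = add (add a b) c) /\
  (forall a b, add a b = add b a) /\
  exists z : T, (forall a, add z a = a /\ add a z = a) /\
                (forall a, exists b, add a b = z /\ add b a = z).

Definition is_group (T : Type) (mul : T -> T -> T) : Prop :=
  (forall a b c, mul a (mul b c) = mul (mul a b) c) /\
  exists e : T, (forall a, mul e a = a /\ mul a e = a) /\
                (forall a, exists b, mul a b = e /\ mul b a = e).

Definition is_brace (T : Type) (add mul : T -> T -> T) : Prop :=
  [/\ is_abelian_group add, is_group mul &
      forall a b c, add (mul a (add b c)) a = add (mul a b) (mul a c)].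

Record brace := Brace {
  bcar : finType;
  badd : bcar -> bcar -> bcar;
  bmul : bcar -> bcar -> bcar;
  bax : is_brace badd bmul }.

Definition is_brace_aut (B : brace) (f : bcar B -> bcar B) : Prop :=
  bijective f /\
  (forall a b, f (badd a b) = badd (f a) (f b)) /\
  (forall a b, f (bmul a b) = bmul (f a) (f b)).

Definition is_brace_action (B1 B2 : brace) (tau : bcar B2 -> bcar B1 -> bcar B1) : Prop :=
  (forall b, is_brace_aut (tau b)) /\
  (forall b b' x, tau (bmul b b') x = tau b (tau b' x)).

Definition sd_add (B1 B2 : brace) (p q : bcar B1 * bcar B2) : bcar B1 * bcar B2 :=
  (badd p.1 q.1, badd p.2 q.2).
Definition sd_mul (B1 B2 : brace) (tau : bcar B2 -> bcar B1 -> bcar B1)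
  (p q : bcar B1 * bcar B2) : bcar B1 * bcar B2 :=
  (bmul p.1 (tau p.2 q.1), bmul p.2 q.2).

Definition is_sd_iso (B B1 B2 : brace) (tau : bcar B2 -> bcar B1 -> bcar B1)
  (f : bcar B -> bcar B1 * bcar B2) : Prop :=
  bijective f /\
  (forall a b, f (badd a b) = sd_add (f a) (f b)) /\
  (forall a b, f (bmul a b) = sd_mul tau (f a) (f b)).

(* Main.v *)
Require Import Defs.
From mathcomp Require Import all_boot all_fingroup all_solvable.
Set Warnings "-notation-overridden,-ambiguous-paths,-redundant-canonical-projection".
From HB Require Import structures.
From mathcomp Require Import all_algebra.
From Stdlib Require Import IndefiniteDescription.
Set Implicit Arguments. Unset Strict Implicit. Unset Printing Implicit Defensive.
Import GRing.Theory.

Section Basics.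
Variable B : brace.
Local Notation T := (bcar B).
Local Notation add := (@badd B).
Local Notation mul := (@bmul B).

Lemma b_addA : forall a b c : T, add a (add b c) = add (add a b) c.
Proof. by case: (bax B) => [[]]. Qed.
Lemma b_addC : forall a b : T, add a b = add b a.
Proof. by case: (bax B) => [[_ []]]. Qed.
Lemma b_zero_ex : exists z : T, (forall a, add z a = a /\ add a z = a) /\
                (forall a, exists b, add a b = z /\ add b a = z).
Proof. by case: (bax B) => [[_ []]]. Qed.
Lemma b_mulA : forall a b c : T, mul a (mul b c) = mul (mul a b) c.
Proof. by case: (bax B) => _ []. Qed.
Lemma b_one_ex : exists e : T, (forall a, mul e a = a /\ mul a e = a) /\
                (forall a, exists b, mul a b = e /\ mul b a = e).
Proof. by case: (bax B) => _ []. Qed.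
Lemma b_dist : forall a b c : T, add (mul a (add b c)) a = add (mul a b) (mul a c).
Proof. by case: (bax B). Qed.

Definition bzero : T := proj1_sig (constructive_indefinite_description _ b_zero_ex).
Lemma bzeroP : (forall a, add bzero a = a /\ add a bzero = a) /\
                (forall a, exists b, add a b = bzero /\ add b a = bzero).
Proof. exact: proj2_sig (constructive_indefinite_description _ b_zero_ex). Qed.
Definition bneg (a : T) : T := proj1_sig (constructive_indefinite_description _ (proj2 bzeroP a)).
Lemma bnegP a : add a (bneg a) = bzero /\ add (bneg a) a = bzero.
Proof. exact: proj2_sig (constructive_indefinite_description _ (proj2 bzeroP a)). Qed.
Lemma b_add0 a : add bzero a = a. Proof. by case: (proj1 bzeroP a). Qed.
Lemma b_addN a : add (bneg a) a = bzero. Proof. by case: (bnegP a). Qed.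

Definition bone : T := proj1_sig (constructive_indefinite_description _ b_one_ex).
Lemma boneP : (forall a, mul bone a = a /\ mul a bone = a) /\
                (forall a, exists b, mul a b = bone /\ mul b a = bone).
Proof. exact: proj2_sig (constructive_indefinite_description _ b_one_ex). Qed.
Definition binv (a : T) : T := proj1_sig (constructive_indefinite_description _ (proj2 boneP a)).
Lemma binvP a : mul a (binv a) = bone /\ mul (binv a) a = bone.
Proof. exact: proj2_sig (constructive_indefinite_description _ (proj2 boneP a)). Qed.
Lemma b_mul1 a : mul bone a = a. Proof. by case: (proj1 boneP a). Qed.
Lemma b_mulV a : mul (binv a) a = bone. Proof. by case: (binvP a). Qed.
End Basics.

Definition addT (B : brace) : Type := bcar B.
Definition mulT (B : brace) : Type := bcar B.
HB.instance Definition _ (B : brace) := Finite.on (addT B).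
HB.instance Definition _ (B : brace) := Finite.on (mulT B).
HB.instance Definition _ (B : brace) :=
  GRing.isZmodule.Build (addT B) (@b_addA B) (@b_addC B) (@b_add0 B) (@b_addN B).
HB.instance Definition _ (B : brace) := [finGroupMixin of addT B for +%R].
HB.instance Definition _ (B : brace) :=
  Finite_isGroup.Build (mulT B) (@b_mulA B) (@b_mul1 B) (@b_mulV B).


Definition bm (B : brace) : addT B -> addT B -> addT B := @bmul B.

Section Alg.
Variable B : brace.
Local Notation A := (addT B).
Local Open Scope ring_scope.
Local Notation mul := (@bm B).

Lemma addE (x y : A) : badd x y = x + y. Proof. by []. Qed.
Lemma zeroE : bzero B = 0 :> A. Proof. by []. Qed.

Lemma bmA (a b c : A) : mul a (mul b c) = mul (mul a b) c.
Proof. exact: b_mulA. Qed.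
Lemma bm1x (a : A) : mul (bone B) a = a.
Proof. exact: b_mul1. Qed.
Lemma bmVx (a : A) : mul (binv a) a = bone B.
Proof. exact: b_mulV. Qed.

Lemma mulx0 (a : A) : mul a 0 = a.
Proof.
have := b_dist a (0:A) (0:A); rewrite !addE addr0 => H.
by apply: (addrI (bm a 0)); rewrite -H.
Qed.

Lemma bone0 : bone B = 0 :> A.
Proof. by rewrite -{1}(mulx0 (bone B)) bm1x. Qed.

Definition lam (a x : A) : A := mul a x - a.

Lemma mul_lam a x : mul a x = a + lam a x.
Proof. by rewrite /lam addrC subrK. Qed.

Lemma lamD a x y : lam a (x + y) = lam a x + lam a y.
Proof.
have H : mul a (x + y) = mul a x + mul a y - a.
  by apply/(addIr a); rewrite subrK; exact: b_dist.
by rewrite /lam H addrACA addrA.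
Qed.

Lemma lam0 a : lam a 0 = 0.
Proof. by rewrite /lam mulx0 subrr. Qed.

Lemma lamN a x : lam a (- x) = - lam a x.
Proof. by apply/eqP; rewrite -subr_eq0 opprK -lamD addNr lam0. Qed.

Lemma lamB a x y : lam a (x - y) = lam a x - lam a y.
Proof. by rewrite lamD lamN. Qed.

Lemma lamM a b x : lam (mul a b) x = lam a (lam b x).
Proof.
rewrite [lam b x]/lam lamB /lam bmA.
by rewrite opprB addrA subrK.
Qed.

Lemma lam1 x : lam 0 x = x.
Proof. by rewrite /lam subr0 -{1}bone0 bm1x. Qed.

Lemma lam_inj a : injective (lam a).
Proof.
move=> x y /eqP; rewrite -subr_eq0 -lamB => /eqP.
rewrite /lam => /eqP; rewrite subr_eq0 -{2}(mulx0 a).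
move=> /eqP H.
have := congr1 (mul (binv a)) H; rewrite !bmA bmVx !bm1x.
by move/eqP; rewrite subr_eq0 => /eqP.
Qed.

End Alg.

Definition Bm (B : brace) (m : nat) : {group addT B} := 'O_(\pi(m))([set: addT B])%G.
Definition Bn (B : brace) (m : nat) : {group addT B} := 'O_(\pi(m)^')([set: addT B])%G.

Lemma cardA (B : brace) : #|{: addT B}| = #|bcar B|.
Proof. apply: (@bij_eq_card _ _ (fun x : addT B => (x : bcar B))). by exists id. Qed.
Lemma cardM (B : brace) : #|{: mulT B}| = #|bcar B|.
Proof. apply: (@bij_eq_card _ _ (fun x : mulT B => (x : bcar B))). by exists id. Qed.

Section Hall.
Variables (B : brace) (m n : nat).
Hypotheses (m0 : 0 < m) (n0 : 0 < n) (cop : coprime m n) (cardB : #|bcar B| = m * n).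
Local Notation A := (addT B).

Lemma addT_nil : nilpotent [set: A].
Proof. exact/abelian_nil/FinRing.zmod_abelian. Qed.

Lemma memBm (x : A) : (x \in Bm B m) = (\pi(m).-elt x)%g.
Proof.
apply: (mem_normal_Hall (nilpotent_pcore_Hall _ addT_nil) (pcore_normal _ _)).
by rewrite inE.
Qed.

Lemma memBn (x : A) : (x \in Bn B m) = (\pi(m)^'.-elt x)%g.
Proof.
apply: (mem_normal_Hall (nilpotent_pcore_Hall _ addT_nil) (pcore_normal _ _)).
by rewrite inE.
Qed.

Lemma cardT_A : #|[set: A]| = m * n.
Proof. by rewrite cardsT cardA. Qed.

Lemma cardBm : #|Bm B m| = m.
Proof.
rewrite (card_Hall (nilpotent_pcore_Hall _ addT_nil)) cardT_A partnM //.
rewrite part_pnat_id ?pnat_pi // part_p'nat ?muln1 //.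
by rewrite -coprime_pi'.
Qed.

Lemma cardBn : #|Bn B m| = n.
Proof.
rewrite (card_Hall (nilpotent_pcore_Hall _ addT_nil)) cardT_A partnM //.
rewrite part_p'nat ?pnatNK ?pnat_pi // part_pnat_id ?mul1n //.
by rewrite -coprime_pi'.
Qed.

Lemma dprodB : (Bm B m \x Bn B m)%g = [set: A].
Proof. exact: nilpotent_pcoreC addT_nil. Qed.

Lemma lamX (a x : A) k : lam a (x ^+ k)%g = (lam a x ^+ k)%g.
Proof.
elim: k => [|k IH]; first by rewrite !expg0; exact: lam0.
by rewrite !expgS -IH; exact: lamD.
Qed.

Lemma order_lam (a x : A) : #[lam a x]%g %| #[x]%g.
Proof. rewrite order_dvdn -lamX expg_order; apply/eqP; exact: lam0. Qed.

Lemma lamBm a x : x \in Bm B m -> lam a x \in Bm B m.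
Proof. by rewrite !memBm; apply: pnat_dvd; exact: order_lam. Qed.
Lemma lamBn a x : x \in Bn B m -> lam a x \in Bn B m.
Proof. by rewrite !memBn; apply: pnat_dvd; exact: order_lam. Qed.

Definition BmM : {set mulT B} := [set x : mulT B | (x : A) \in Bm B m].
Definition BnM : {set mulT B} := [set x : mulT B | (x : A) \in Bn B m].

Lemma group_closed (S : {group A}) :
  (forall a x, x \in S -> lam a x \in S) ->
  group_set [set x : mulT B | (x : A) \in S].
Proof.
move=> HS; apply/group_setP; split.
  rewrite inE; have -> : (1%g : mulT B) = (0%R : A) by exact: bone0.
  exact: (group1 S).
move=> x y; rewrite !inE => Hx Hy.
have -> : ((x * y)%g : A) = ((x : A) + lam x y)%R by exact: mul_lam.
exact: (groupM Hx (HS _ _ Hy)).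
Qed.

Canonical BmM_group := Group (group_closed (@lamBm)).
Canonical BnM_group := Group (group_closed (@lamBn)).

Lemma card_conv (S : {set A}) : #|[set x : mulT B | (x : A) \in S]| = #|S|.
Proof.
rewrite -(card_imset S (f := fun x : A => (x : mulT B))); last by move=> x y.
congr (#|pred_of_set _|); apply/setP => x; rewrite inE.
apply/idP/imsetP; first by move=> Hx; exists (x : A).
by case=> y Hy ->.
Qed.

Lemma cardBmM : #|BmM| = m.
Proof. by rewrite card_conv cardBm. Qed.
Lemma cardBnM : #|BnM| = n.
Proof. by rewrite card_conv cardBn. Qed.

End Hall.

Lemma abelP (gT : finGroupType) (A : {set gT}) :
  reflect {in A &, forall x y, commute x y} (abelian A).
Proof. by apply: (iffP centsP) => H x Hx y Hy; apply: H. Qed.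

Section PairLemmas.
Variables gT1 gT2 : finGroupType.
Lemma mul_pair (a c : gT1) (b d : gT2) : ((a, b) * (c, d))%g = ((a * c)%g, (b * d)%g).
Proof. by []. Qed.
Lemma conj_pair (a c : gT1) (b d : gT2) : ((a, b) ^ (c, d))%g = ((a ^ c)%g, (b ^ d)%g).
Proof. by []. Qed.
Lemma setX_abelian (A1 : {set gT1}) (A2 : {set gT2}) :
  abelian A1 -> abelian A2 -> abelian (setX A1 A2).
Proof.
move=> /abelP a1 /abelP a2; apply/abelP => [[x1 x2] [y1 y2]].
rewrite !in_setX => /andP[h1 h2] /andP[k1 k2].
by rewrite /commute !mul_pair (a1 _ _ h1 k1) (a2 _ _ h2 k2).
Qed.
End PairLemmas.

Section Key.
Variables (B : brace) (m n : nat).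
Hypotheses (m0 : 0 < m) (n0 : 0 < n) (cop : coprime m n) (cardB : #|bcar B| = m * n).
Hypothesis Hyp : forall (gT : finGroupType) (G : {group gT}),
      #|G| = m * n -> solvable G ->
      exists H : {group gT}, (H <| G)%g /\ #|H| = m.
Local Notation A := (addT B).
Local Open Scope group_scope.

Definition lamp (a : A) : {perm A} := perm (@lam_inj B a).
Definition tr (b : A) : {perm A} := perm (@addIr A b).

Lemma lampE a x : lamp a x = lam a x. Proof. by rewrite permE. Qed.
Lemma trE b x : tr b x = (x + b)%R. Proof. by rewrite permE. Qed.

Lemma iter_lam (a : A) k x : iter k (lam a) x = lam ((a : mulT B) ^+ k) x.
Proof.
elim: k => [|k IH] /=.
  rewrite expg0 (_ : ((1 : mulT B) : A) = 0%R) ?lam1 //; exact: bone0.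
  by rewrite IH expgS -lamM.
Qed.

Lemma lamp_m (a : A) : a \in Bm B m -> lamp a ^+ m = 1.
Proof.
move=> Ha; apply/permP => x; rewrite permX perm1.
have aM : (a : mulT B) \in BmM B m by rewrite inE.
have : (a : mulT B) ^+ m = 1.
  by apply/eqP; rewrite -order_dvdn -(cardBmM m0 n0 cop cardB) order_dvdG.
rewrite (eq_iter (lampE a)) iter_lam => ->.
rewrite (_ : ((1 : mulT B) : A) = 0%R); first exact: lam1.
exact: bone0.
Qed.

Definition Tset : {set {perm A}} := [set tr b | b in Bn B m].

Lemma trD b c : tr b * tr c = tr (b + c)%R.
Proof. by apply/permP => x; rewrite permM !trE addrA. Qed.

Lemma Tgroup_set : group_set Tset.
Proof.
apply/group_setP; split.
  apply/imsetP; exists 0%R; first exact: (group1 (Bn B m)).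
  by apply/permP => x; rewrite trE perm1 addr0.
move=> x y /imsetP[b Hb ->] /imsetP[c Hc ->]; rewrite trD.
by apply/imsetP; exists (b + c)%R => //; exact: (groupM Hb Hc).
Qed.
Canonical TG := Group Tgroup_set.

Lemma tr_inj : injective tr.
Proof. by move=> b c /(congr1 (fun p : {perm A} => p 0%R)); rewrite !trE !add0r. Qed.

Lemma cardT : #|Tset| = n.
Proof. rewrite card_imset; [exact: (cardBn m0 n0 cop cardB) | exact: tr_inj]. Qed.

Lemma T_abelian : abelian Tset.
Proof.
apply/abelP => x y /imsetP[b _ ->] /imsetP[c _ ->].
by rewrite /commute !trD addrC.
Qed.

Lemma conj_tr (a b : A) : tr b ^ lamp a = tr (lam a b).
Proof.
apply/permP => v; rewrite conjgE !permM !trE lampE lamD.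
by rewrite -lampE permKV.
Qed.

Lemma lamp_norm (a : A) : lamp a \in 'N(Tset).
Proof.
rewrite inE; apply/subsetP => y; rewrite mem_conjg => /imsetP[b Hb Hy].
rewrite -(conjgKV (lamp a) y) Hy conj_tr.
by apply/imsetP; exists (lam a b) => //; exact: lamBn.
Qed.

Definition kk (a : A) := m %/ #[lamp a].
Definition NN (a : A) := setX_group TG [1 'Z_(kk a)]%G.
Definition KK (a : A) := setX_group <[lamp a]>%G (Zp_group (kk a)).

Lemma nTL a : <[lamp a]> \subset 'N(Tset).
Proof. by rewrite cycle_subG lamp_norm. Qed.

Lemma inv_pair (gT1 gT2 : finGroupType) (y : gT1) (z : gT2) : (y, z)^-1 = (y^-1, z^-1).
Proof. by []. Qed.

Lemma nNK a : KK a \subset 'N(NN a).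
Proof.
apply/subsetP => [[y z]] /setXP [Hy Hz]; rewrite inE; apply/subsetP => [[u1 u2]].
rewrite mem_conjg inv_pair conj_pair !in_setX.
case/andP => h1 h2; apply/andP; split.
  by rewrite -(memJ_norm u1 (groupVr (subsetP (nTL a) _ Hy))).
by move: h2; rewrite !inE conjg_eq1.
Qed.

Lemma o_dvd a : a \in Bm B m -> #[lamp a] %| m.
Proof. by move=> Ha; rewrite order_dvdn lamp_m. Qed.

Lemma cardN a : #|NN a| = n.
Proof. by rewrite cardsX cardT cards1 muln1. Qed.

Lemma cardK a : a \in Bm B m -> #|KK a| = m.
Proof.
move=> Ha; have k0 : 0 < kk a by rewrite divn_gt0 ?order_gt0 // dvdn_leq // o_dvd.
by rewrite cardsX card_Zp // -orderE mulnC /kk divnK // o_dvd.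
Qed.

Lemma cardG a : a \in Bm B m -> #|(NN a <*> KK a)%G| = (m * n)%N.
Proof.
move=> Ha.
have TI : NN a :&: KK a = 1 by apply: coprime_TIg; rewrite cardN cardK // coprime_sym.
by rewrite /= (norm_joinEr (nNK a)) TI_cardMg // cardN cardK // mulnC.
Qed.

Lemma nNG a : NN a <| (NN a <*> KK a)%G.
Proof. by rewrite /normal joing_subl join_subG normG nNK. Qed.

Lemma solG a : solvable (NN a <*> KK a)%G.
Proof.
rewrite (series_sol (nNG a)) abelian_sol ?setX_abelian ?T_abelian ?abelian1 //=.
rewrite (norm_joinEr (nNK a)) quotientMidl; apply/abelian_sol/quotient_abelian/setX_abelian.
  exact: cycle_abelian.
exact: abelianS (subsetT _) (Zp_abelian _).
Qed.

Lemma keyL (a b : A) : a \in Bm B m -> b \in Bn B m -> lam a b = b.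
Proof.
move=> Ha Hb.
have [H [nHG cardH]] := Hyp (cardG Ha) (solG a).
set G := (NN a <*> KK a)%G in nHG cardH.
have hallH : \pi(m).-Hall(G) H.
  rewrite /pHall normal_sub //= /pgroup cardH pnat_pi //= -divgS ?normal_sub //.
  by rewrite (cardG Ha) cardH mulKn // -coprime_pi'.
pose x : ({perm A} * 'Z_(kk a))%type := (lamp a, 1).
pose y : ({perm A} * 'Z_(kk a))%type := (tr b, 1).
have xK : x \in KK a by rewrite in_setX cycle_id group1.
have xG : x \in G by rewrite (subsetP (joing_subr _ _)).
have xH : x \in H.
  rewrite (mem_normal_Hall hallH nHG xG); apply: pnat_dvd (pnat_pi m0).
  by rewrite -(cardK Ha); apply: order_dvdG.
have yN : y \in NN a by rewrite in_setX group1 andbT; apply/imsetP; exists b.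
have c1 : [~ y, x] = 1.
  have : [~ y, x] \in NN a :&: H.
    rewrite inE; apply/andP; split.
      apply: (subsetP (_ : [~: NN a, H] \subset NN a)); last exact: mem_commg.
      rewrite commg_subl; apply: subset_trans (normal_norm (nNG a)); exact: normal_sub nHG.
    apply: (subsetP (_ : [~: NN a, H] \subset H)); last exact: mem_commg.
    rewrite commg_subr; apply: subset_trans (normal_norm nHG); exact: normal_sub (nNG a).
  have TI : NN a :&: H = 1 by apply: coprime_TIg; rewrite cardN cardH coprime_sym.
  by rewrite TI; move/set1P.
have cm : commute y x by apply/commgP/eqP.
move: cm; rewrite /commute /x /y !mul_pair => /(congr1 fst) /= /permP /(_ 0%R).
by rewrite !permM !trE add0r !lampE lam0 add0r.
Qed.

End Key.

Section Sub.
Variables (B : brace) (S : {group addT B}).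
Hypothesis Smul : forall x y : addT B, x \in S -> y \in S -> bm x y \in S.
Hypothesis Sinv : forall x : addT B, x \in S -> (binv x : addT B) \in S.
Local Open Scope ring_scope.

Definition sT : finType := {x : addT B | x \in S}.
Definition sz0 : sT := exist _ (0 : addT B) (group1 S).
Definition sadd (x y : sT) : sT := insubd x (val x + val y).
Definition smul (x y : sT) : sT := insubd x (bm (val x) (val y)).
Definition sneg (x : sT) : sT := insubd x (- val x).
Definition sinv (x : sT) : sT := insubd x (binv (val x) : addT B).

Lemma val_sadd x y : val (sadd x y) = val x + val y.
Proof.
rewrite /sadd val_insubd.
by have -> : (val x + val y) \in S := groupM (valP x) (valP y).
Qed.
Lemma val_smul x y : val (smul x y) = bm (val x) (val y).
Proof. by rewrite /smul val_insubd (Smul (valP x) (valP y)). Qed.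
Lemma val_sneg x : val (sneg x) = - val x.
Proof.
rewrite /sneg val_insubd.
by have -> : (- val x) \in S := groupVr (valP x).
Qed.
Lemma val_sinv x : val (sinv x) = binv (val x).
Proof. by rewrite /sinv val_insubd (Sinv (valP x)). Qed.

Lemma sbrace_ax : is_brace sadd smul.
Proof.
split.
- split; first by move=> a b c; apply: val_inj; rewrite !val_sadd addrA.
  split; first by move=> a b; apply: val_inj; rewrite !val_sadd addrC.
  exists sz0; split.
    by move=> a; split; apply: val_inj; rewrite val_sadd /= ?add0r ?addr0.
  by move=> a; exists (sneg a); split; apply: val_inj;
    rewrite val_sadd val_sneg /= ?addrN ?addNr.
- split; first by move=> a b c; apply: val_inj; rewrite !val_smul bmA.
  exists sz0; split.
    move=> a; split; apply: val_inj; rewrite val_smul /= ?mulx0 //.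
    by rewrite -bone0 bm1x.
  move=> a; exists (sinv a); split; apply: val_inj; rewrite val_smul val_sinv /= -bone0.
    by case: (binvP (val a)).
  exact: bmVx.
- move=> a b c; apply: val_inj; rewrite !val_sadd !val_smul val_sadd.
  exact: b_dist.
Qed.

Definition sbrace : brace := Brace sbrace_ax.

Lemma card_sbrace : #|bcar sbrace| = #|S|.
Proof. by rewrite /= /sT card_sig. Qed.

End Sub.

Section Dec.
Variables (B : brace) (m : nat).
Local Notation A := (addT B).
Local Open Scope ring_scope.

Lemma dec_ex (x : A) : exists u : A, u \in Bm B m /\ x - u \in Bn B m.
Proof.
have [u [v [Hu Hv ex _]]] := mem_dprod (dprodB B m) (in_setT x).
exists u; split => //.
have -> : x = u + v := ex.
by rewrite addrC addKr.
Qed.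

Definition pm (x : A) : A := proj1_sig (constructive_indefinite_description _ (dec_ex x)).
Definition pn (x : A) : A := x - pm x.
Lemma pmP x : pm x \in Bm B m.
Proof. exact: (proj1 (proj2_sig (constructive_indefinite_description _ (dec_ex x)))). Qed.
Lemma pnP x : pn x \in Bn B m.
Proof. exact: (proj2 (proj2_sig (constructive_indefinite_description _ (dec_ex x)))). Qed.
Lemma pmn x : pm x + pn x = x.
Proof. by rewrite /pn addrC subrK. Qed.
End Dec.

Section Final.
Variables (B : brace) (m n : nat).
Hypotheses (m0 : 0 < m) (n0 : 0 < n) (cop : coprime m n) (cardB : #|bcar B| = m * n).
Hypothesis Hyp : forall (gT : finGroupType) (G : {group gT}),
      #|G| = m * n -> solvable G ->
      exists H : {group gT}, (H <| G)%g /\ #|H| = m.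
Local Notation A := (addT B).
Local Open Scope ring_scope.

Lemma TIB : (Bm B m :&: Bn B m = 1)%g.
Proof. by apply: coprime_TIg; rewrite (cardBm m0 n0 cop cardB) (cardBn m0 n0 cop cardB). Qed.

Lemma dec_uniq (u v u' v' : A) : u \in Bm B m -> v \in Bn B m ->
  u' \in Bm B m -> v' \in Bn B m -> u + v = u' + v' -> u = u' /\ v = v'.
Proof.
move=> Hu Hv Hu' Hv' e.
have h1 : u - u' \in Bm B m := groupM Hu (groupVr Hu').
have h2 : u - u' = v' - v.
  by apply/eqP; rewrite subr_eq addrAC [v' + u']addrC -e addrK.
have h3 : u - u' \in Bn B m by rewrite h2; exact: (groupM Hv' (groupVr Hv)).
have : u - u' \in (Bm B m :&: Bn B m)%g by rewrite inE h1 h3.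
rewrite TIB => /set1P h4.
have h5 : u - u' = 0 := h4.
move/eqP: h5; rewrite subr_eq0 => /eqP h6; split => //.
by move: e; rewrite h6 => /addrI.
Qed.

Lemma pm_uniq (u v : A) : u \in Bm B m -> v \in Bn B m ->
  pm m (u + v) = u /\ pn m (u + v) = v.
Proof.
move=> Hu Hv; apply: dec_uniq => //; [exact: pmP | exact: pnP | exact: pmn].
Qed.

Lemma key' (a b : A) : a \in Bm B m -> b \in Bn B m -> bm a b = a + b.
Proof. by move=> Ha Hb; rewrite mul_lam (keyL m0 n0 cop cardB Hyp Ha Hb). Qed.

Lemma invE (b : mulT B) : ((b^-1)%g : A) = (binv b : A).
Proof. by []. Qed.

Lemma binvBn (b : A) : b \in Bn B m -> (binv b : A) \in Bn B m.
Proof.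
move=> Hb; have : (b : mulT B) \in BnM_group B m by rewrite inE.
move/(@groupVr _ (BnM_group B m)); rewrite inE invE; exact: id.
Qed.
Lemma binvBm (b : A) : b \in Bm B m -> (binv b : A) \in Bm B m.
Proof.
move=> Hb; have : (b : mulT B) \in BmM_group B m by rewrite inE.
move/(@groupVr _ (BmM_group B m)); rewrite inE invE; exact: id.
Qed.
Lemma bmBm (a b : A) : a \in Bm B m -> b \in Bm B m -> bm a b \in Bm B m.
Proof. by move=> Ha Hb; rewrite mul_lam; apply: groupM Ha (lamBm _ Hb). Qed.
Lemma bmBn (a b : A) : a \in Bn B m -> b \in Bn B m -> bm a b \in Bn B m.
Proof. by move=> Ha Hb; rewrite mul_lam; apply: groupM Ha (lamBn _ Hb). Qed.

Lemma conjL (b c : A) : b \in Bn B m -> c \in Bm B m ->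
  lam b c = bm b (bm c (binv b)).
Proof.
move=> Hb Hc; rewrite (key' Hc (binvBn Hb)) mul_lam lamD.
have e : b + lam b (binv b) = 0.
  by rewrite -mul_lam -bone0; case: (binvP b).
by rewrite addrCA e addr0.
Qed.

End Final.

Lemma conjM (B : brace) (b x y : addT B) :
  bm b (bm (bm x y) (binv b)) = bm (bm b (bm x (binv b))) (bm b (bm y (binv b))).
Proof.
change ((b : mulT B) * (((x : mulT B) * y) * (b : mulT B)^-1) =
   ((b : mulT B) * ((x : mulT B) * (b : mulT B)^-1)) * ((b : mulT B) * ((y : mulT B) * (b : mulT B)^-1)))%g.
by rewrite !mulgA mulgKV.
Qed.

Lemma mul4 (B : brace) (a b c d : addT B) :
  bm (bm a b) (bm c d) = bm (bm a (bm b (bm c (binv b)))) (bm b d).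
Proof.
change (((a : mulT B) * b) * ((c : mulT B) * d) =
  ((a : mulT B) * ((b : mulT B) * ((c : mulT B) * (b : mulT B)^-1))) * ((b : mulT B) * d))%g.
by rewrite !mulgA mulgKV.
Qed.

Section Main.
Variables (B : brace) (m n : nat).
Hypotheses (m0 : 0 < m) (n0 : 0 < n) (cop : coprime m n) (cardB : #|bcar B| = m * n).
Hypothesis Hyp : forall (gT : finGroupType) (G : {group gT}),
      #|G| = m * n -> solvable G ->
      exists H : {group gT}, (H <| G)%g /\ #|H| = m.
Local Notation A := (addT B).
Local Open Scope ring_scope.

Definition B1 : brace := sbrace (@bmBm B m) (@binvBm B m).
Definition B2 : brace := sbrace (@bmBn B m) (@binvBn B m).

Definition tau (b : bcar B2) (a : bcar B1) : bcar B1 := insubd a (lam (val b) (val a)).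
Definition ff (x : bcar B) : bcar B1 * bcar B2 :=
  (insubd (@sz0 B (Bm B m)) (pm m x), insubd (@sz0 B (Bn B m)) (pn m x)).

Lemma tau_val b a : val (tau b a) = lam (val b) (val a).
Proof. by rewrite /tau val_insubd (lamBm _ (valP a)). Qed.
Lemma ff1 x : val (ff x).1 = pm m x.
Proof. by rewrite /= val_insubd pmP. Qed.
Lemma ff2 x : val (ff x).2 = pn m x.
Proof. by rewrite /= val_insubd pnP. Qed.

Lemma tau_action : is_brace_action tau.
Proof.
split.
  move=> b; split; last split.
  - apply: injF_bij => a a' /(congr1 val); rewrite !tau_val => /lam_inj e.
    exact: val_inj.
  - by move=> a a'; apply: val_inj; rewrite tau_val !val_sadd !tau_val lamD.
  - move=> a a'; apply: val_inj.
    rewrite tau_val !(val_smul (@bmBm B m)).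
    rewrite !tau_val.
    have Hb := valP b; have Ha := valP a; have Ha' := valP a'.
    by rewrite !(conjL m0 n0 cop cardB Hyp Hb) ?conjM //; exact: bmBm.
move=> b b' x; apply: val_inj.
rewrite !tau_val (val_smul (@bmBn B m)) lamM.
by [].
Qed.

Lemma ff_inj : injective ff.
Proof.
move=> x y e.
have e1 := congr1 (fun p => val p.1) e; have e2 := congr1 (fun p => val p.2) e.
move: e1 e2 => /=; rewrite !val_insubd !pmP !pnP => e1 e2.
by rewrite -(pmn m x) -(pmn m y) e1 e2.
Qed.

Lemma ff_iso : is_sd_iso tau ff.
Proof.
split; last split.
- apply: inj_card_bij; first exact: ff_inj.
  rewrite card_prod /B1 /B2 !card_sbrace (cardBm m0 n0 cop cardB) (cardBn m0 n0 cop cardB).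
  by rewrite cardB.
- move=> x y.
  have [e1 e2] := pm_uniq m0 n0 cop cardB (groupM (pmP m x) (pmP m y)) (groupM (pnP m x) (pnP m y)).
  have ex : (pm m x + pm m y) + (pn m x + pn m y) = badd x y.
    by rewrite addrACA !pmn.
  rewrite ex in e1 e2.
  rewrite [LHS]surjective_pairing /sd_add; congr (_, _); apply: val_inj.
    by rewrite ff1 val_sadd !ff1 e1.
  by rewrite ff2 val_sadd !ff2 e2.
- move=> x y.
  set a := pm m x; set b := pn m x; set c := pm m y; set d := pn m y.
  have Ha : a \in Bm B m := pmP m x. have Hb : b \in Bn B m := pnP m x.
  have Hc : c \in Bm B m := pmP m y. have Hd : d \in Bn B m := pnP m y.
  have K' := key' m0 n0 cop cardB Hyp.
  have exy : bm x y = bm a (lam b c) + bm b d.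
    have -> : (x : A) = bm a b by rewrite K' // pmn.
    have -> : (y : A) = bm c d by rewrite K' // pmn.
    rewrite mul4 -(conjL m0 n0 cop cardB Hyp Hb Hc) K' //.
      exact: bmBm (lamBm _ Hc).
    exact: bmBn.
  have [e1 e2] := pm_uniq m0 n0 cop cardB (bmBm Ha (lamBm b Hc)) (bmBn Hb Hd).
  rewrite -exy in e1 e2.
  rewrite [LHS]surjective_pairing /sd_mul; congr (_, _); apply: val_inj.
    by rewrite ff1 (val_smul (@bmBm B m)) tau_val !ff1 ff2 e1.
  by rewrite ff2 (val_smul (@bmBn B m)) !ff2 e2.
Qed.

End Main.

Theorem mainTheorem1 (m n : nat) :
  0 < m -> 0 < n -> coprime m n ->
  (forall (gT : finGroupType) (G : {group gT}),
      #|G| = m * n -> solvable G ->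
      exists H : {group gT}, (H <| G)%g /\ #|H| = m) ->
  forall B : brace, #|bcar B| = m * n ->
  exists (B1 B2 : brace) (tau : bcar B2 -> bcar B1 -> bcar B1)
         (f : bcar B -> bcar B1 * bcar B2),
    [/\ #|bcar B1| = m, #|bcar B2| = n, is_brace_action tau & is_sd_iso tau f].
Proof.
move=> m0 n0 cop Hyp B cardB.
exists (B1 B m), (B2 B m), (@tau B m), (@ff B m); split.
- by rewrite /B1 card_sbrace (cardBm m0 n0 cop cardB).
- by rewrite /B2 card_sbrace (cardBn m0 n0 cop cardB).
- exact: tau_action m0 n0 cop cardB Hyp.
- exact: ff_iso m0 n0 cop cardB Hyp.
Qed.
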